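(* Let $E$ be a congruence on $\overline{\boldsymbol{T}(X_1,\ldots,X_n)}$. The following are equivalent: (1) if $(f,-\infty)\in E$, then $f=-\infty$; (2) $\overline{\boldsymbol{T}(X_1,\ldots,X_n)}/E$ is a semifield; (3) $E$ is a semifield.
   Context: $\boldsymbol{T}=\mathbb{R}\cup\{-\infty\}$ with $a\oplus b=\max\{a,b\}$, $a\odot b=a+b$. $\overline{\boldsymbol{T}[X_1,\ldots,X_n]}$ is the tropical polynomial semiring modulo identifying polynomials defining the same function $\boldsymbol{T}^n\to\boldsymbol{T}$; it is cancellative and $\overline{\boldsymbol{T}(X_1,\ldots,X_n)}$ is its semifield of fractions, with zero $-\infty$ and one $0$. A semifield is a commutative semiring with $0\neq1$ in which every nonzero element is multiplicatively invertible. A congruence is an equivalence relation $E\subset S\times S$ compatible with both operations; $E$ is a subsemiring of $S\times S$ (componentwise operations, zero $(-\infty,-\infty)$, one $(0,0)$), and ''$E$ is a semifield'' refers to this structure. *)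

(* Defs.v *)
From Stdlib Require Import Reals List.
Open Scope R_scope.

(** * The tropical semifield T = R ∪ {-oo}; None encodes -oo. *)
Definition T : Type := option R.

Definition tadd (a b : T) : T :=
  match a, b with
  | None, _ => b
  | _, None => a
  | Some x, Some y => Some (Rmax x y)
  end.

Definition tmul (a b : T) : T :=
  match a, b with
  | Some x, Some y => Some (x + y)
  | _, _ => None
  end.

(** tropical power a^k = k*a, with a^0 = 0 (the tropical one), also for a = -oo *)
Fixpoint tpow (a : T) (k : nat) : T :=
  match k with 0%nat => Some 0 | S k => tmul a (tpow a k) end.

(** A term is c ⊙ X_1^{e 0} ⊙ ... ⊙ X_n^{e (n-1)} with c ∈ R (terms with
    coefficient -oo are simply absent); only e 0 .. e (n-1) are used. *)
Record term := Term { coef : R; expo : nat -> nat }.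
Definition poly := list term.

(** points of T^n: x : nat -> T, only x 0 .. x (n-1) are used. *)
Fixpoint mon_eval (n : nat) (e : nat -> nat) (x : nat -> T) : T :=
  match n with
  | 0%nat => Some 0
  | S m => tmul (mon_eval m e x) (tpow (x m) (e m))
  end.

Definition term_eval (n : nat) (t : term) (x : nat -> T) : T :=
  tmul (Some (coef t)) (mon_eval n (expo t) x).

Fixpoint poly_eval (n : nat) (p : poly) (x : nat -> T) : T :=
  match p with
  | nil => None
  | t :: p' => tadd (term_eval n t x) (poly_eval n p' x)
  end.

Definition term_mul (t s : term) : term :=
  Term (coef t + coef s) (fun i => (expo t i + expo s i)%nat).
Definition one_term : term := Term 0 (fun _ => 0%nat).

Definition poly_add (p q : poly) : poly := p ++ q.
Definition poly_mul (p q : poly) : poly := flat_map (fun t => map (term_mul t) q) p.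

(** Nonzero elements of the polynomial-function semiring: a polynomial defines
    the constant function -oo iff it has no terms, so nonzero denominators are
    represented as nonempty term lists (head, tail). *)
Definition npoly : Type := (term * poly)%type.
Definition to_poly (q : npoly) : poly := fst q :: snd q.
Definition npoly_mul (a b : npoly) : npoly :=
  (term_mul (fst a) (fst b),
   map (term_mul (fst a)) (snd b) ++ poly_mul (snd a) (to_poly b)).

(** A fraction is (numerator, nonzero denominator); two fractions f/g, f'/g'
    are equal iff f ⊙ g' = f' ⊙ g as functions T^n -> T (the usual equality of
    fractions; the semiring is cancellative). *)
Definition rat_fun : Type := (poly * npoly)%type.

Definition rf_eq (n : nat) (f g : rat_fun) : Prop :=
  forall x : nat -> T,
    tmul (poly_eval n (fst f) x) (poly_eval n (to_poly (snd g)) x) =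
    tmul (poly_eval n (fst g) x) (poly_eval n (to_poly (snd f)) x).

Definition rf_zero : rat_fun := (nil, (one_term, nil)).
Definition rf_one : rat_fun := (one_term :: nil, (one_term, nil)).

Definition rf_add (f g : rat_fun) : rat_fun :=
  (poly_add (poly_mul (fst f) (to_poly (snd g))) (poly_mul (fst g) (to_poly (snd f))),
   npoly_mul (snd f) (snd g)).

Definition rf_mul (f g : rat_fun) : rat_fun :=
  (poly_mul (fst f) (fst g), npoly_mul (snd f) (snd g)).

(** * Congruences on the semifield T(X_1..X_n) (elements represented up to rf_eq):
    an equivalence relation, compatible with ⊕ and ⊙, and well defined on the
    semifield, i.e. containing its equality rf_eq. *)
Record congruence (n : nat) (E : rat_fun -> rat_fun -> Prop) : Prop := {
  cong_refl : forall f, E f f;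
  cong_sym : forall f g, E f g -> E g f;
  cong_trans : forall f g h, E f g -> E g h -> E f h;
  cong_eq : forall f g, rf_eq n f g -> E f g;
  cong_add : forall f f' g g', E f f' -> E g g' -> E (rf_add f g) (rf_add f' g');
  cong_mul : forall f f' g g', E f f' -> E g g' -> E (rf_mul f g) (rf_mul f' g')
}.

(** * Being a semifield, for a structure given by a carrier predicate P on a type A,
    its equality eqv (assumed to be a well-defined equality of the structure),
    zero z, one o, addition add, multiplication mul:
    a commutative semiring with 0 ≠ 1 in which every nonzero element is invertible. *)
Record is_semifield {A : Type} (P : A -> Prop) (eqv : A -> A -> Prop)
    (z o : A) (add mul : A -> A -> A) : Prop := {
  sf_zero_in : P z;
  sf_one_in : P o;
  sf_add_in : forall x y, P x -> P y -> P (add x y);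
  sf_mul_in : forall x y, P x -> P y -> P (mul x y);
  sf_addA : forall x y w, P x -> P y -> P w -> eqv (add x (add y w)) (add (add x y) w);
  sf_addC : forall x y, P x -> P y -> eqv (add x y) (add y x);
  sf_add0 : forall x, P x -> eqv (add z x) x;
  sf_mulA : forall x y w, P x -> P y -> P w -> eqv (mul x (mul y w)) (mul (mul x y) w);
  sf_mulC : forall x y, P x -> P y -> eqv (mul x y) (mul y x);
  sf_mul1 : forall x, P x -> eqv (mul o x) x;
  sf_mulD : forall x y w, P x -> P y -> P w ->
      eqv (mul x (add y w)) (add (mul x y) (mul x w));
  sf_mul0 : forall x, P x -> eqv (mul z x) z;
  sf_01 : ~ eqv z o;
  sf_inv : forall x, P x -> ~ eqv x z -> exists y, P y /\ eqv (mul x y) o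
}.

Definition pair_eq (n : nat) (p q : rat_fun * rat_fun) : Prop :=
  rf_eq n (fst p) (fst q) /\ rf_eq n (snd p) (snd q).
Definition pair_op (op : rat_fun -> rat_fun -> rat_fun) (p q : rat_fun * rat_fun)
  : rat_fun * rat_fun := (op (fst p) (fst q), op (snd p) (snd q)).

(** the quotient T(X)/E is a semifield: classes, with equality E *)
Definition quotient_is_semifield (E : rat_fun -> rat_fun -> Prop) : Prop :=
  is_semifield (fun _ : rat_fun => True) E rf_zero rf_one rf_add rf_mul.

(** E ⊂ T(X) × T(X), as a subsemiring with componentwise operations, is a semifield *)
Definition congruence_is_semifield (n : nat) (E : rat_fun -> rat_fun -> Prop) : Prop :=
  is_semifield (fun p : rat_fun * rat_fun => E (fst p) (snd p)) (pair_eq n)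
    (rf_zero, rf_zero) (rf_one, rf_one) (pair_op rf_add) (pair_op rf_mul).

(* Main.v *)
Require Import Defs.
From Stdlib Require Import Reals List.
From Stdlib Require Import Lra Ring.

Lemma Rmax_plus_distr (a b c : R) : Rmax (a + c) (b + c) = Rmax a b + c.
Proof. unfold Rmax; destruct (Rle_dec (a + c) (b + c)), (Rle_dec a b); lra. Qed.

Definition tzero : T := None.
Definition tone : T := Some 0.
Lemma T_sr : semi_ring_theory tzero tone tadd tmul (@eq T).
Proof.
  constructor.
  - intros [x|]; reflexivity.
  - intros [x|] [y|]; simpl; try reflexivity; now rewrite Rmax_comm.
  - intros [x|] [y|] [z|]; simpl; try reflexivity; now rewrite Rmax_assoc.
  - intros [x|]; simpl; try reflexivity; now rewrite Rplus_0_l.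
  - intros [x|]; reflexivity.
  - intros [x|] [y|]; simpl; try reflexivity; now rewrite Rplus_comm.
  - intros [x|] [y|] [z|]; simpl; try reflexivity; now rewrite Rplus_assoc.
  - intros [x|] [y|] [z|]; simpl; try reflexivity. now rewrite Rmax_plus_distr.
Qed.

Add Ring Tring : T_sr.
Ltac fold_t := try change (@None R) with tzero in *; try change (Some 0) with tone in *.
Ltac tring := fold_t; ring.


Lemma tpow_add a m k : tpow a (m + k) = tmul (tpow a m) (tpow a k).
Proof. induction m; cbn [tpow Nat.add]. - tring. - rewrite IHm. tring. Qed.

Lemma mon_eval_add n e f x :
  mon_eval n (fun i => (e i + f i)%nat) x = tmul (mon_eval n e x) (mon_eval n f x).
Proof. induction n; cbn [mon_eval]. - simpl; now rewrite Rplus_0_r. - rewrite IHn, tpow_add. tring. Qed.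

Lemma term_eval_mul n t s x :
  term_eval n (term_mul t s) x = tmul (term_eval n t x) (term_eval n s x).
Proof.
  unfold term_eval, term_mul; cbn [coef expo]. rewrite mon_eval_add.
  change (Some (coef t + coef s)) with (tmul (Some (coef t)) (Some (coef s))). tring.
Qed.

Lemma ev_map n t q x :
  poly_eval n (map (term_mul t) q) x = tmul (term_eval n t x) (poly_eval n q x).
Proof. induction q; cbn [map poly_eval]. - tring. - rewrite IHq, term_eval_mul. tring. Qed.

Lemma ev_app n p q x : poly_eval n (p ++ q) x = tadd (poly_eval n p x) (poly_eval n q x).
Proof. induction p; cbn [app poly_eval]. - tring. - rewrite IHp. tring. Qed.

Lemma ev_add n p q x : poly_eval n (poly_add p q) x = tadd (poly_eval n p x) (poly_eval n q x).
Proof. apply ev_app. Qed.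

Lemma ev_mul n p q x : poly_eval n (poly_mul p q) x = tmul (poly_eval n p x) (poly_eval n q x).
Proof.
  induction p; cbn [poly_mul flat_map poly_eval]. - tring.
  - unfold poly_mul in *. cbn [flat_map poly_eval]. rewrite ev_app, ev_map, IHp. tring.
Qed.

Lemma ev_np n a b x :
  poly_eval n (to_poly (npoly_mul a b)) x =
  tmul (poly_eval n (to_poly a) x) (poly_eval n (to_poly b) x).
Proof.
  destruct a as [a1 a2], b as [b1 b2]. unfold to_poly, npoly_mul; simpl.
  rewrite ev_app, ev_map, term_eval_mul.
  change (poly_eval n (a2) x) with (poly_eval n a2 x).
  rewrite ev_mul. simpl. tring.
Qed.

Lemma mon_eval_zero n x : mon_eval n (fun _ => 0%nat) x = Some 0.
Proof. induction n; simpl. - reflexivity. - rewrite IHn. simpl. now rewrite Rplus_0_r. Qed.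

Lemma ev_onep n x : poly_eval n (to_poly (one_term, nil)) x = Some 0.
Proof.
  simpl. unfold term_eval; simpl. rewrite mon_eval_zero. simpl. now rewrite Rplus_0_r.
Qed.

Lemma ev_one1 n x : poly_eval n (one_term :: nil) x = Some 0.
Proof. apply ev_onep. Qed.

Lemma ev_nil n x : poly_eval n nil x = None.
Proof. reflexivity. Qed.

Ltac rfring :=
  unfold rf_eq; intro x;
  cbn [fst snd rf_add rf_mul rf_zero rf_one];
  repeat (rewrite ?ev_add, ?ev_mul, ?ev_np, ?ev_onep, ?ev_one1, ?ev_nil);
  tring.

Section Ids.
Variable n : nat.
Lemma i_addA f g h : rf_eq n (rf_add f (rf_add g h)) (rf_add (rf_add f g) h).
Proof. rfring. Qed.
Lemma i_addC f g : rf_eq n (rf_add f g) (rf_add g f).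
Proof. rfring. Qed.
Lemma i_add0 f : rf_eq n (rf_add rf_zero f) f.
Proof. rfring. Qed.
Lemma i_mulA f g h : rf_eq n (rf_mul f (rf_mul g h)) (rf_mul (rf_mul f g) h).
Proof. rfring. Qed.
Lemma i_mulC f g : rf_eq n (rf_mul f g) (rf_mul g f).
Proof. rfring. Qed.
Lemma i_mul1 f : rf_eq n (rf_mul rf_one f) f.
Proof. rfring. Qed.
Lemma i_mulD f g h : rf_eq n (rf_mul f (rf_add g h)) (rf_add (rf_mul f g) (rf_mul f h)).
Proof. rfring. Qed.
Lemma i_mul0 f : rf_eq n (rf_mul rf_zero f) rf_zero.
Proof. rfring. Qed.
Lemma i_sym f g : rf_eq n f g -> rf_eq n g f.
Proof. unfold rf_eq; intros H x; symmetry; auto. Qed.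
Lemma i_nil d : rf_eq n (nil, d) rf_zero.
Proof. rfring. Qed.
Lemma i_inv t p d : rf_eq n (rf_mul (t :: p, d) (to_poly d, (t, p))) rf_one.
Proof. change (t :: p) with (to_poly (t, p)) at 1. rfring. Qed.
Lemma i_inv' t p d : rf_eq n (rf_mul (to_poly d, (t, p)) (t :: p, d)) rf_one.
Proof. change (t :: p) with (to_poly (t, p)) at 1. rfring. Qed.
Lemma i_cancel f fi gi :
  rf_eq n (rf_mul fi f) rf_one -> rf_eq n (rf_mul fi (rf_mul f gi)) gi.
Proof.
  unfold rf_eq; intros H x; specialize (H x); revert H.
  cbn [fst snd rf_add rf_mul rf_zero rf_one];
  repeat (rewrite ?ev_add, ?ev_mul, ?ev_np, ?ev_onep, ?ev_one1, ?ev_nil).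
  intro H.
  transitivity (tmul (tmul (tmul (poly_eval n (fst fi) x) (poly_eval n (fst f) x)) (Some 0))
      (tmul (poly_eval n (fst gi) x) (poly_eval n (to_poly (snd gi)) x))); [tring|].
  rewrite H. tring.
Qed.
End Ids.

Definition x0 : nat -> T := fun _ => Some 0.

Lemma tpow_some r k : exists s, tpow (Some r) k = Some s.
Proof. induction k; simpl. - eauto. - destruct IHk as [s ->]. simpl; eauto. Qed.

Lemma mon_some n e : exists s, mon_eval n e x0 = Some s.
Proof.
  induction n; simpl. - eauto.
  - destruct IHn as [s ->]. destruct (tpow_some 0 (e n)) as [u Hu].
    unfold x0 at 1. rewrite Hu. simpl; eauto.
Qed.

Lemma ev_some n t p : exists s, poly_eval n (t :: p) x0 = Some s.
Proof.
  simpl. unfold term_eval. destruct (mon_some n (expo t)) as [s ->]. simpl.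
  destruct (poly_eval n p x0); simpl; eauto.
Qed.

Lemma not_zero n t p d : ~ rf_eq n (t :: p, d) rf_zero.
Proof.
  intro H. specialize (H x0). revert H.
  cbn [fst snd rf_zero]. rewrite ev_onep, ev_nil.
  destruct (ev_some n t p) as [s ->]. simpl. discriminate.
Qed.

Lemma not_zero_one n b : ~ rf_eq n (rf_mul rf_zero b) rf_one.
Proof.
  intro H. specialize (H x0). revert H.
  cbn [fst snd rf_zero rf_one rf_mul]. rewrite ev_np, ev_mul, ev_one1, ev_onep, ev_nil.
  destruct b as [b [t p]]. cbn [snd]. unfold to_poly at 1. cbn [fst snd].
  destruct (ev_some n t p) as [s ->]. simpl. discriminate.
Qed.

Lemma not_zero_one' n : ~ rf_eq n rf_zero rf_one.
Proof.
  intro H. specialize (H x0). revert H. cbn [fst snd rf_zero rf_one].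
  rewrite ev_onep, ev_one1, ev_nil. simpl. discriminate.
Qed.

Theorem lemma3p4 (n : nat) (E : rat_fun -> rat_fun -> Prop) :
  congruence n E ->
  ((forall f, E f rf_zero -> rf_eq n f rf_zero) <-> quotient_is_semifield E) /\
  (quotient_is_semifield E <-> congruence_is_semifield n E).
Proof.
  intro C.
  assert (H12 : (forall f, E f rf_zero -> rf_eq n f rf_zero) -> quotient_is_semifield E).
  { intro H1. constructor; intros; try exact I;
    try (apply (cong_eq _ _ C); first [ apply i_addA | apply i_addC | apply i_add0 | apply i_mulA
               | apply i_mulC | apply i_mul1 | apply i_mulD | apply i_mul0 ]).
    - intro HE. apply (not_zero_one' n). apply i_sym. apply H1. now apply (cong_sym _ _ C).
    - destruct x as [[|t p] d].
      + exfalso. apply H0. apply (cong_eq _ _ C). apply i_nil.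
      + exists (to_poly d, (t, p)). split; [exact I|]. apply (cong_eq _ _ C). apply i_inv. }
  assert (H21 : quotient_is_semifield E -> (forall f, E f rf_zero -> rf_eq n f rf_zero)).
  { intros Q f Hf. destruct f as [[|t p] d]; [apply i_nil|]. exfalso.
    apply (sf_01 _ _ _ _ _ _ Q).
    set (f := (t :: p, d)). set (y := (to_poly d, (t, p))).
    apply (cong_trans _ _ C) with (rf_mul rf_zero y).
    { apply (cong_eq _ _ C). apply i_sym, i_mul0. }
    apply (cong_trans _ _ C) with (rf_mul f y).
    { apply (cong_mul _ _ C). now apply (cong_sym _ _ C). apply (cong_refl _ _ C). }
    apply (cong_eq _ _ C). apply i_inv. }
  assert (H13 : (forall f, E f rf_zero -> rf_eq n f rf_zero) -> congruence_is_semifield n E).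
  { intro H1. constructor; intros; cbn [fst snd pair_op] in *.
    - apply (cong_refl _ _ C).
    - apply (cong_refl _ _ C).
    - apply (cong_add _ _ C); auto.
    - apply (cong_mul _ _ C); auto.
    - split; apply i_addA.
    - split; apply i_addC.
    - split; apply i_add0.
    - split; apply i_mulA.
    - split; apply i_mulC.
    - split; apply i_mul1.
    - split; apply i_mulD.
    - split; apply i_mul0.
    - intros [Ha _]. exact (not_zero_one' n Ha).
    - destruct x as [f g]. cbn [fst snd] in *.
      assert (Hf : forall f g, E f g -> rf_eq n f rf_zero -> rf_eq n g rf_zero).
      { intros a b Hab Ha. apply H1. apply (cong_trans _ _ C) with a.
        now apply (cong_sym _ _ C). now apply (cong_eq _ _ C). }
      destruct f as [[|t p] d].
      { exfalso; apply H0. split; [apply i_nil|]. eapply Hf; [exact H|apply i_nil]. }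
      destruct g as [[|s q] d'].
      { exfalso; apply H0. split; [|apply i_nil]. eapply Hf;
        [apply (cong_sym _ _ C); exact H|apply i_nil]. }
      set (f := (t :: p, d)) in *. set (g := (s :: q, d')) in *.
      set (fi := (to_poly d, (t, p))). set (gi := (to_poly d', (s, q))).
      exists (fi, gi). cbn [fst snd pair_op]. split; [|split; apply i_inv].
      apply (cong_trans _ _ C) with (rf_mul rf_one fi).
      { apply (cong_eq _ _ C). apply i_sym, i_mul1. }
      apply (cong_trans _ _ C) with (rf_mul (rf_mul g gi) fi).
      { apply (cong_mul _ _ C); [|apply (cong_refl _ _ C)].
        apply (cong_eq _ _ C). apply i_sym, i_inv. }
      apply (cong_trans _ _ C) with (rf_mul fi (rf_mul g gi)).
      { apply (cong_eq _ _ C). apply i_mulC. }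
      apply (cong_trans _ _ C) with (rf_mul fi (rf_mul f gi)).
      { apply (cong_mul _ _ C); [apply (cong_refl _ _ C)|].
        apply (cong_mul _ _ C); [now apply (cong_sym _ _ C)|apply (cong_refl _ _ C)]. }
      apply (cong_eq _ _ C). apply i_cancel. apply i_inv'. }
  assert (H31 : congruence_is_semifield n E -> (forall f, E f rf_zero -> rf_eq n f rf_zero)).
  { intros S f Hf. destruct f as [[|t p] d]; [apply i_nil|]. exfalso.
    destruct (sf_inv _ _ _ _ _ _ S ((t :: p, d), rf_zero)) as [[a b] [_ [_ Hb]]].
    - exact Hf.
    - intros [Ha _]. exact (not_zero n t p d Ha).
    - exact (not_zero_one n b Hb). }
  tauto.
Qed.
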